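(* Let $q=2$, $1\leq r\leq 2m-1$, and let $s$ be an integer with $1<s\leq 2m-r$. Let $f$ be a symplectic basis function of degree $s$ and class $(0,\sigma,\tau,\upsilon)$, where $\sigma=\min\{2m-r-s+\delta(m>r)(m-r),\lfloor s/2\rfloor\}$, $\tau=s-2\sigma$, $\upsilon=m-\sigma-\tau$. Then: (a) if $\sigma<s/2-1$, there exists $g\in\mathbf F_2\operatorname{Sp}(V)$ such that $gf$ is of class $(0,\sigma+1,\tau-3,\upsilon+2)$; (b) if $\sigma=s/2-1$ or $\sigma=(s-1)/2$, there exists $g\in\mathbf F_2\operatorname{Sp}(V)$ such that $gf$ is of class $(0,\sigma,\tau-1,\upsilon+1)$; (c) if $\sigma=s/2$, there exists $g\in\mathbf F_2\operatorname{Sp}(V)$ such that $gf$ is of class $(0,\sigma-1,\tau+1,\upsilon)$.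
   Context: $k=\mathbf F_2$. $V$ is a $2m$-dimensional $k$-space with nondegenerate alternating form and symplectic basis with coordinate functions $x_1,\dots,x_m,y_m,\dots,y_1$; $\operatorname{Sp}(V)$ acts on functions $V\to k$ by linear substitution (note $x_i^2=x_i$ as functions), extended linearly to the group ring. $\delta(P)=1$ if $P$ holds and $0$ otherwise. In $k[X_1,\dots,X_m,Y_1,\dots,Y_m]$ put $W_i=X_iY_i$ and let $Z_i$ denote $X_i$ or $Y_i$. A square-free homogeneous polynomial $F$ is of class $(\rho,\sigma,\tau,\upsilon)$ if there is a partition of $\{1,\dots,m\}$ into $R=\{r_1,\dots,r_\rho\}$, $R'=\{r'_1,\dots,r'_\rho\}$, $S,T,U$ with $|S|=\sigma,|T|=\tau,|U|=\upsilon$ and $F=\prod_{i=1}^\rho(W_{r_i}+W_{r'_i})\prod_{i\in S}W_i\prod_{i\in T}Z_i$ (degree $2\rho+2\sigma+\tau$); a function is of that class if it equals $\phi(F')$ for some $F'$ of that class, where $\phi$ is evaluation $X_i\mapsto x_i,Y_i\mapsto y_i$. $P^\lambda_\ell$ is the set of such polynomials with $2\rho+2\sigma+\tau=\lambda$ and $\sigma\leq\ell$; choose $B^\lambda_0\subseteq P^\lambda_0$ maximal linearly independent and inductively $B^\lambda_\ell=B^\lambda_{\ell-1}\cup P'^\lambda_\ell$ ($P'^\lambda_\ell\subseteq P^\lambda_\ell$) a basis of the span of $P^\lambda_\ell$. For $q=2$ a symplectic basis function of degree $\lambda$ is $\phi(F)$ with $F\in B^\lambda_{\lfloor\lambda/2\rfloor}$.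 *)

(* Defs.v *)
From HB Require Import structures.
From mathcomp Require Import all_boot all_order all_algebra.
Set Implicit Arguments. Unset Strict Implicit. Unset Printing Implicit Defensive.
Import GRing.Theory.
Local Open Scope ring_scope.

(* V = F_2^(2m), as row vectors; coordinate x_i is entry (lshift m i),
   coordinate y_i is entry (rshift m i), for i : 'I_m (0-based). *)
Definition Vec (m : nat) := 'rV['F_2]_(m + m).
Definition Fn (m : nat) := {ffun Vec m -> 'F_2}.

Definition xc m (v : Vec m) (i : 'I_m) : 'F_2 := v ord0 (lshift m i).
Definition yc m (v : Vec m) (i : 'I_m) : 'F_2 := v ord0 (rshift m i).
Definition Wc m (v : Vec m) (i : 'I_m) : 'F_2 := xc v i * yc v i.

Definition sform m (u v : Vec m) : 'F_2 :=
  \sum_(i < m) (xc u i * yc v i + yc u i * xc v i).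

Definition symplectic m (M : 'M['F_2]_(m + m)) : Prop :=
  forall u v : Vec m, sform (u *m M) (v *m M) = sform u v.

(* action of g = sum_{h in G} h in F_2 Sp(V) on functions, by linear
   substitution *)
Definition act m (G : {set 'M['F_2]_(m + m)}) (f : Fn m) : Fn m :=
  [ffun v => \sum_(h in G) f (v *m h)].

(* f is of class (rho, sigma, tau, upsilon): f = phi(F) with
   F = prod_i (W_{r_i} + W_{r'_i}) prod_{i in S} W_i prod_{i in T} Z_i,
   where R = {r_i}, R' = {r'_i}, S, T, U partition {1..m},
   |R| = |R'| = rho, |S| = sigma, |T| = tau, |U| = upsilon;
   Z_i = X_i if z i, Y_i otherwise. *)
Definition class_fun m (rho sigma tau upsilon : nat) (f : Fn m) : Prop :=
  exists (r r' : 'I_rho -> 'I_m) (S T : {set 'I_m}) (z : 'I_m -> bool),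
    let R := [set r i | i in 'I_rho] in
    let R' := [set r' i | i in 'I_rho] in
    let U := ~: (R :|: R' :|: S :|: T) in
    [/\ injective r, injective r',
        [/\ [disjoint R & R'], [disjoint R & S], [disjoint R & T],
            [disjoint R' & S] & [disjoint R' & T]] /\ [disjoint S & T],
        [/\ #|S| = sigma, #|T| = tau & #|U| = upsilon] &
        forall v : Vec m,
          f v = (\prod_(i < rho) (Wc v (r i) + Wc v (r' i)))
                * (\prod_(i in S) Wc v i)
                * (\prod_(i in T) (if z i then xc v i else yc v i))].

(* P^lambda_ell (via the injective evaluation phi on square-free polynomials) *)
Definition Pl m (lambda ell : nat) (f : Fn m) : Prop :=
  exists rho sigma tau upsilon,
    [/\ class_fun rho sigma tau upsilon f,
        (2 * rho + 2 * sigma + tau)%N = lambda & (sigma <= ell)%N].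

Definition lin_indep m (B : {set Fn m}) : Prop :=
  forall A : {set Fn m}, A \subset B -> A != set0 ->
    exists v, \sum_(g in A) g v != 0.

Definition in_span m (B : {set Fn m}) (h : Fn m) : Prop :=
  exists A : {set Fn m}, A \subset B /\ forall v, h v = \sum_(g in A) g v.

(* f is a symplectic basis function of degree s (q = 2): f = phi(F) with
   F in B^s_{floor(s/2)} for some admissible choice of the sets B^s_ell. *)
Definition symp_basis_fun m (s : nat) (f : Fn m) : Prop :=
  exists B : nat -> {set Fn m},
    [/\ (forall g, g \in B 0%N -> Pl s 0 g),
        lin_indep (B 0%N),
        (forall B' : {set Fn m}, B 0%N \proper B' ->
            (forall g, g \in B' -> Pl s 0 g) -> ~ lin_indep B'),
        (forall l, (0 < l <= s./2)%N ->
           exists P' : {set Fn m},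
             [/\ (forall g, g \in P' -> Pl s l g),
                 B l = B l.-1 :|: P',
                 lin_indep (B l) &
                 forall g, Pl s l g -> in_span (B l) g]) &
        f \in B s./2].

(* Main.v *)
Require Import Defs.
From Stdlib Require Import Lia.
From HB Require Import structures.
From mathcomp Require Import all_boot all_order all_algebra.

Module Helpers.
Set Implicit Arguments. Unset Strict Implicit. Unset Printing Implicit Defensive.
Import GRing.Theory.
Local Open Scope ring_scope.


Lemma F2_cases (x : 'F_2) : x = 0 \/ x = 1.
Proof. case: x => [[|[|n]] H] //=. by left; apply/val_inj. by right; apply/val_inj. Qed.

Lemma F2_add_self (x : 'F_2) : x + x = 0.
Proof. by case: (F2_cases x) => ->; apply/eqP; vm_compute. Qed.

Section Gen.
Variable m : nat.
Notation V := (Vec m).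
Notation M := 'M['F_2]_(m + m).

Definition pos (i : 'I_m) (b : bool) : 'I_(m + m) :=
  if b then lshift m i else rshift m i.
Definition ev (j : 'I_(m + m)) : V := delta_mx 0 j.

Lemma sformDl (u1 u2 w : V) : sform (u1 + u2) w = sform u1 w + sform u2 w.
Proof.
rewrite /sform -big_split /=; apply: eq_bigr => i _.
rewrite /xc /yc !mxE; rewrite !mulrDl.
by rewrite addrACA.
Qed.

Lemma sformZl c (u w : V) : sform (c *: u) w = c * sform u w.
Proof.
rewrite /sform mulr_sumr; apply: eq_bigr => i _.
by rewrite /xc /yc !mxE mulrDr !mulrA.
Qed.

Lemma sformC (u w : V) : sform u w = sform w u.
Proof.
rewrite /sform; apply: eq_bigr => i _.
by rewrite addrC [xc w i * _]mulrC [yc w i * _]mulrC.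
Qed.

Lemma sformDr (u w1 w2 : V) : sform u (w1 + w2) = sform u w1 + sform u w2.
Proof. by rewrite sformC sformDl !(sformC u). Qed.

Lemma sformZr c (u w : V) : sform u (c *: w) = c * sform u w.
Proof. by rewrite sformC sformZl sformC. Qed.

Lemma sformii (w : V) : sform w w = 0.
Proof.
rewrite /sform big1 // => i _.
by rewrite mulrC F2_add_self.
Qed.

Lemma sform0r (u : V) : sform u 0 = 0.
Proof. by rewrite -(scale0r (0 : V)) sformZr mul0r. Qed.

Lemma sform_ev (v : V) i b : sform v (ev (pos i b)) = v ord0 (pos i (~~ b)).
Proof.
rewrite /sform (bigD1 i) //= big1 => [|k kNi].
  rewrite /xc /yc /ev /pos; case: b => /=; rewrite !mxE;
  by rewrite ?eq_rlshift ?eq_lrshift ?eq_lshift ?eq_rshift ?eqxx /= ?mulr0 ?mulr1 ?addr0 ?add0r.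
rewrite /xc /yc /ev /pos; case: b => /=; rewrite !mxE;
by rewrite ?eq_rlshift ?eq_lrshift ?eq_lshift ?eq_rshift (negbTE kNi) /= ?mulr0 ?addr0.
Qed.

Definition tv (w : V) : M :=
  \matrix_(i, j) ((i == j)%:R + sform (ev i) w * w ord0 j).

Lemma tvE (v w : V) : v *m tv w = v + sform v w *: w.
Proof.
apply/rowP => j; rewrite !mxE.
under eq_bigr do rewrite mxE mulrDr.
rewrite big_split /=.
rewrite (bigD1 j) //= eqxx mulr1 big1 ?addr0 => [|i /negbTE ->]; last by rewrite mulr0.
congr (_ + _).
have -> : sform v w = \sum_i v ord0 i * sform (ev i) w.
  rewrite {1}(row_sum_delta v).
  elim/big_rec2: _ => [|i y1 y2 _ IH]; first by rewrite -(scale0r (0:V)) sformZl mul0r.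
  by rewrite sformDl sformZl IH.
by rewrite mulr_suml; apply: eq_bigr => i _; rewrite mulrA.
Qed.

Lemma tv_symp (w : V) : symplectic (tv w).
Proof.
move=> u v; rewrite !tvE sformDl !sformDr !sformZl !sformZr sformii !mulr0 addr0.
rewrite [sform w v]sformC [sform v w * _]mulrC.
by rewrite -addrA F2_add_self addr0.
Qed.

Lemma symp1 : symplectic (1%:M : M).
Proof. by move=> u v; rewrite !mulmx1. Qed.

Lemma sympM (A B : M) : symplectic A -> symplectic B -> symplectic (A *m B).
Proof. by move=> hA hB u v; rewrite !mulmxA hB hA. Qed.

End Gen.


Section Gen2.
Variable m : nat.
Notation V := (Vec m).
Notation M := 'M['F_2]_(m + m).

Definition oddset (l : seq M) : {set M} := [set h | odd (count_mem h l)].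

Lemma natr_addb (a b : bool) : ((a (+) b : bool) : nat)%:R = (a : nat)%:R + (b : nat)%:R :> 'F_2.
Proof. by case: a; case: b => //=; apply/eqP; vm_compute. Qed.

Lemma act_oddset (l : seq M) (f : Fn m) (v : V) :
  act (oddset l) f v = \sum_(h <- l) f (v *m h).
Proof.
rewrite /act ffunE.
have -> : \sum_(h in oddset l) f (v *m h) =
          \sum_h ((odd (count_mem h l) : nat)%:R * f (v *m h)).
  rewrite big_mkcond /=; apply: eq_bigr => h _; rewrite inE.
  by case: (odd _) => /=; rewrite ?mul1r ?mul0r.
elim: l => [|x l IH].
  by rewrite big_nil big1 // => h _; rewrite mul0r.
rewrite big_cons -IH.
rewrite (eq_bigr (fun h => ((x == h) : nat)%:R * f (v *m h) +
                           (odd (count_mem h l) : nat)%:R * f (v *m h))).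
  rewrite big_split /=; congr (_ + _).
  rewrite (bigD1 x) //= eqxx mul1r big1 ?addr0 // => h hx.
  by rewrite eq_sym (negbTE hx) mul0r.
move=> h _ /=; rewrite -mulrDl -natr_addb; congr (_ * _).
by rewrite oddD; case: (x == h).
Qed.

Definition frame := seq ('I_m * bool).

Definition poss (l : frame) : seq 'I_(m + m) :=
  flatten [seq [:: pos p.1 p.2; pos p.1 (~~ p.2)] | p <- l].

Definition loc (v : V) (l : frame) : seq 'F_2 :=
  [seq v ord0 j | j <- poss l].

Fixpoint embed (l : frame) (w : seq 'F_2) : V :=
  match l, w with
  | p :: l', a :: b :: w' =>
      a *: ev (pos p.1 p.2) + b *: ev (pos p.1 (~~ p.2)) + embed l' w'
  | _, _ => 0
  end.

Fixpoint lform (s w : seq 'F_2) : 'F_2 :=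
  match s, w with
  | a :: b :: s', c :: d :: w' => a * d + b * c + lform s' w'
  | _, _ => 0
  end.

Definition ltrans (w s : seq 'F_2) : seq 'F_2 :=
  let c := lform s w in [seq p.1 + c * p.2 | p <- zip s w].

Lemma sform_embed (v : V) l w : sform v (embed l w) = lform (loc v l) w.
Proof.
elim: l w => [|[i z] l IH] w; first by rewrite sform0r.
case: w => [|a [|b w]] /=; rewrite ?sform0r //.
rewrite !sformDr !sformZr !sform_ev negbK IH.
by rewrite /loc /= [b * _]mulrC [a * _]mulrC; congr (_ + _); rewrite addrC.
Qed.

Lemma embed_out l w j : j \notin poss l -> embed l w ord0 j = 0.
Proof.
elim: l w => [|[i z] l IH] w; first by rewrite mxE.
case: w => [|a [|b w]] /=; rewrite ?mxE //.
rewrite !inE !negb_or => /and3P [h1 h2 h3] /=. rewrite (negbTE h1) (negbTE h2) ?andbF !mulr0 !add0r; exact: IH.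
Qed.

Lemma pos_neq (i : 'I_m) z : pos i z != pos i (~~ z).
Proof. by case: z; rewrite /pos /= ?eq_lrshift ?eq_rlshift. Qed.

Lemma loc_embed l w : uniq (poss l) -> size w = size (poss l) -> loc (embed l w) l = w.
Proof.
elim: l w => [|[i z] l IH] w; first by case: w.
case: w => [|a [|b w]] //= hu hs.
move: hu => /and3P [h1 h2 hu].
move: h1; rewrite inE negb_or => /andP [_ h1].
rewrite /loc /= !mxE !eqxx (negbTE (pos_neq i z)) eq_sym (negbTE (pos_neq i z)) /=.
rewrite !embed_out // mulr1 mulr0 mulr0 mulr1 !addr0 add0r.
congr [:: _, _ & _].
have hs' : size w = size (poss l) by move: hs => [].
rewrite -[RHS](IH w hu hs') /loc.
apply/eq_in_map => j hj; rewrite !mxE.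
have -> : (j == pos i z) = false by apply/negbTE; apply: contra h1 => /eqP <-.
have -> : (j == pos i (~~ z)) = false by apply/negbTE; apply: contra h2 => /eqP <-.
by rewrite !andbF !mulr0 !add0r.
Qed.

Lemma loc_add (u w : V) c l :
  loc (u + c *: w) l = [seq p.1 + c * p.2 | p <- zip (loc u l) (loc w l)].
Proof.
rewrite /loc; elim: (poss l) => [|j s IH] //=.
by rewrite IH !mxE.
Qed.

Definition good (h : M) (l : frame) (phi : seq 'F_2 -> seq 'F_2) :=
  (forall (v : V) j, j \notin poss l -> (v *m h) ord0 j = v ord0 j) /\
  (forall v, loc (v *m h) l = phi (loc v l)).

Lemma good_tv l w : uniq (poss l) -> size w = size (poss l) ->
  good (tv (embed l w)) l (ltrans w).
Proof.
move=> hu hs; split => v.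
  by move=> j hj; rewrite tvE !mxE embed_out // mulr0 addr0.
by rewrite tvE loc_add loc_embed // sform_embed.
Qed.

Lemma good1 l : good 1%:M l id.
Proof. by split=> v; rewrite mulmx1. Qed.

Lemma goodM h1 h2 l p1 p2 : good h1 l p1 -> good h2 l p2 -> good (h1 *m h2) l (p2 \o p1).
Proof.
move=> [a1 b1] [a2 b2]; split => v.
  by move=> j hj; rewrite mulmxA a2 // a1.
by rewrite mulmxA b2 b1.
Qed.

Fixpoint mxw (l : frame) (ws : seq (seq 'F_2)) : M :=
  match ws with
  | [::] => 1%:M
  | w :: ws' => tv (embed l w) *m mxw l ws'
  end.

Fixpoint runw (ws : seq (seq 'F_2)) (s : seq 'F_2) : seq 'F_2 :=
  match ws with
  | [::] => s
  | w :: ws' => runw ws' (ltrans w s)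
  end.

Lemma good_mxw l ws : uniq (poss l) -> all (fun w => size w == size (poss l)) ws ->
  good (mxw l ws) l (runw ws).
Proof.
move=> hu; elim: ws => [|w ws IH] /=; first by split => v; rewrite ?mulmx1.
move=> /andP [/eqP hw hws].
exact: (goodM (good_tv hu hw) (IH hws)).
Qed.

Lemma symp_mxw l ws : symplectic (mxw l ws).
Proof.
elim: ws => [|w ws IH] /=; first exact: symp1.
exact: sympM (tv_symp _) IH.
Qed.

End Gen2.


Section Gen3.
Variable m : nat.
Notation V := (Vec m).
Notation M := 'M['F_2]_(m + m).

Lemma pos_eq (i j : 'I_m) b c : (pos i b == pos j c) = (i == j) && (b == c).
Proof.
by case: b; case: c; rewrite /pos ?eq_lshift ?eq_rshift ?eq_lrshift ?eq_rlshift ?andbT ?andbF.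
Qed.

Lemma pos_notin (i : 'I_m) b (l : frame m) :
  i \notin [seq p.1 | p <- l] -> pos i b \notin poss l.
Proof.
elim: l => [|[j c] l IH] //=.
rewrite !inE negb_or => /andP [hij hl].
rewrite !pos_eq !negb_or (negbTE hij) /=; exact: IH.
Qed.

Definition Zc (z : 'I_m -> bool) (v : V) i := if z i then xc v i else yc v i.

Lemma Zc_pos z (v : V) i : Zc z v i = v ord0 (pos i (z i)).
Proof. by rewrite /Zc /pos; case: (z i). Qed.

Lemma Wc_pos (v : V) i b : Wc v i = v ord0 (pos i b) * v ord0 (pos i (~~ b)).
Proof. by rewrite /Wc /xc /yc /pos; case: b => //=; rewrite mulrC. Qed.

Definition rest (S T : {set 'I_m}) z (v : V) :=
  (\prod_(i in S) Wc v i) * (\prod_(i in T) Zc z v i).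

Lemma rest_inv S T z l h phi (v : V) :
  good h l phi -> (forall i, i \in S :|: T -> i \notin [seq p.1 | p <- l]) ->
  rest S T z (v *m h) = rest S T z v.
Proof.
move=> [hg _] hST; rewrite /rest; congr (_ * _); apply: eq_bigr => i hi.
  rewrite (Wc_pos _ _ true) (Wc_pos v _ true) !hg //; apply: pos_notin; apply: hST;
  by rewrite inE hi.
rewrite !Zc_pos !hg //; apply: pos_notin; apply: hST; by rewrite inE hi orbT.
Qed.

Lemma main_local (f : Fn m) (g : V -> 'F_2) (l : frame m) wsl L0 L1 S T z :
  uniq (poss l) -> all (all (fun w => size w == size (poss l))) wsl ->
  (forall i, i \in S :|: T -> i \notin [seq p.1 | p <- l]) ->
  (forall v, f v = L0 (loc v l) * rest S T z v) ->
  (forall v, g v = L1 (loc v l) * rest S T z v) ->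
  (forall v, \sum_(ws <- wsl) L0 (runw ws (loc v l)) = L1 (loc v l)) ->
  forall v, act (oddset [seq mxw l ws | ws <- wsl]) f v = g v.
Proof.
move=> hu hsz hST hf hg hloc v.
rewrite act_oddset big_map hg -hloc mulr_suml.
rewrite big_seq_cond [RHS]big_seq_cond; apply: eq_bigr => ws /andP [hws _].
have hgd := good_mxw hu (allP hsz ws hws).
rewrite hf; erewrite rest_inv; [|exact: hgd|exact: hST]; congr (_ * _).
by case: hgd => _ ->.
Qed.

Lemma symp_oddset (l : frame m) wsl (h : M) : h \in oddset [seq mxw l ws | ws <- wsl] -> symplectic h.
Proof.
rewrite inE => ho.
have : h \in [seq mxw l ws | ws <- wsl].
  by rewrite -has_pred1 has_count lt0n; apply: contraTneq ho => ->.
by case/mapP => ws _ ->; exact: symp_mxw.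
Qed.

End Gen3.


Lemma I0_empty (i : 'I_0) : False. Proof. by case: i. Qed.
Definition r0 m : 'I_0 -> 'I_m := fun i => False_rect _ (I0_empty i).

Lemma imset_I0 m (r : 'I_0 -> 'I_m) : [set r i | i in 'I_0] = set0.
Proof. by apply/setP => x; rewrite inE; apply/imsetP => -[[i hi]]. Qed.

Lemma card_compl m (A : {set 'I_m}) : #|~: A| = (m - #|A|)%N.
Proof.
have h := cardsC A; rewrite card_ord in h.
have hA : (#|A| <= m)%N by have := max_card A; rewrite card_ord.
by apply/eqP; rewrite -(eqn_add2l #|A|) h subnKC.
Qed.

Lemma class_build m sigma tau upsilon (S T : {set 'I_m}) z (g : Fn m) :
  [disjoint S & T] -> #|S| = sigma -> #|T| = tau -> (m - (sigma + tau))%N = upsilon ->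
  (forall v, g v = (\prod_(i in S) Wc v i) * (\prod_(i in T) Zc z v i)) ->
  class_fun 0 sigma tau upsilon g.
Proof.
move=> dST cS cT cU hg.
exists (@r0 m), (@r0 m), S, T, z => /=.
rewrite !imset_I0 !set0U.
have d0 : forall A : {set 'I_m}, [disjoint set0 & A] by move=> A; rewrite -setI_eq0 set0I.
split.
- by move=> [].
- by move=> [].
- by split; first split; rewrite ?d0.
- split => //; rewrite card_compl cardsU.
  by move: dST; rewrite -setI_eq0 => /eqP ->; rewrite cards0 subn0 cS cT.
- by move=> v; rewrite big_ord0 mul1r hg.
Qed.

Lemma class_destr m sigma tau upsilon (f : Fn m) : class_fun 0 sigma tau upsilon f ->
  exists (S T : {set 'I_m}) z, [/\ [disjoint S & T] /\ (sigma + tau <= m)%N, #|S| = sigma, #|T| = tau,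
     (m - (sigma + tau))%N = upsilon &
     forall v, f v = (\prod_(i in S) Wc v i) * (\prod_(i in T) Zc z v i)].
Proof.
move=> [r [r' [S [T [z /=]]]]]; rewrite !imset_I0 !set0U.
move=> [_ _ [_ dST] [cS cT cU] hf].
have cST : #|S :|: T| = (sigma + tau)%N.
  by rewrite cardsU; move: dST; rewrite -setI_eq0 => /eqP ->; rewrite cards0 subn0 cS cT.
exists S, T, z; split => //.
  split => //; by rewrite -cST; have := max_card (S :|: T); rewrite card_ord.
  by rewrite -cU card_compl cST.
by move=> v; rewrite hf big_ord0 mul1r.
Qed.


Ltac f2case x := case: (F2_cases x) => ->.

Lemma case_c m sigma upsilon (f : Fn m) : (0 < sigma)%N ->
  class_fun 0 sigma 0 upsilon f ->
  exists G : {set 'M['F_2]_(m + m)},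
    (forall h, h \in G -> symplectic h) /\
    class_fun 0 sigma.-1 1 upsilon (act G f).
Proof.
move=> hs /class_destr [S [T [z [[dST _] cS cT cU hf]]]].
have T0 : T = set0 by apply/eqP; rewrite -cards_eq0 cT.
subst T.
have [a aS] : exists a, a \in S by apply/card_gt0P; rewrite cS.
pose l : frame m := [:: (a, true)].
pose wsl := [:: [::]; [:: [:: 0; 1]]] : seq (seq (seq 'F_2)).
exists (oddset [seq mxw l ws | ws <- wsl]); split; first exact: symp_oddset.
apply: (@class_build _ _ _ _ (S :\ a) [set a] (fun _ => true)).
- by rewrite disjoint_sym disjoints1 setD11.
- by move: cS; rewrite (cardsD1 a) aS add1n => <-.
- by rewrite cards1.
- by rewrite -cU addn1 prednK // addn0.
apply: (@main_local _ _ _ l wsl (fun s => nth 0 s 0 * nth 0 s 1) (fun s => nth 0 s 0)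
          (S :\ a) set0 z).
- by rewrite /= !inE ?pos_eq ?eq_lrshift.
- by [].
- by move=> i; rewrite setU0 !inE => /andP [].
- move=> v; rewrite hf big_set0 mulr1 (big_setD1 a aS) /rest big_set0 mulr1.
  by rewrite (Wc_pos _ _ true).
- move=> v; rewrite big_set1 /rest big_set0 mulr1 mulrC.
  by rewrite /Zc /xc /pos.
- move=> v; rewrite /loc /=.
  move: (v ord0 (pos a true)) (v ord0 (pos a false)) => x1 x2.
  rewrite !big_cons big_nil.
  by f2case x1; f2case x2; apply/eqP; vm_compute.
Qed.



Lemma case_b2 m sigma upsilon (f : Fn m) :
  class_fun 0 sigma 2 upsilon f ->
  exists G : {set 'M['F_2]_(m + m)},
    (forall h, h \in G -> symplectic h) /\
    class_fun 0 sigma 1 upsilon.+1 (act G f).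
Proof.
move=> /class_destr [S [T [z [[dST hm] cS cT cU hf]]]].
have [b bT] : exists b, b \in T by apply/card_gt0P; rewrite cT.
have cTb : #|T :\ b| = 1%N by move: cT; rewrite (cardsD1 b) bT add1n => -[].
have [c cTb'] : exists c, c \in T :\ b by apply/card_gt0P; rewrite cTb.
have cb : c != b by move: cTb'; rewrite !inE => /andP [].
have cT' : c \in T by move: cTb'; rewrite !inE => /andP [].
pose l : frame m := [:: (b, z b); (c, z c)].
pose wsl := [:: [:: [:: 1; 0; 0; 0]]; [:: [:: 1; 0; 0; 1]]] : seq (seq (seq 'F_2)).
exists (oddset [seq mxw l ws | ws <- wsl]); split; first exact: symp_oddset.
apply: (@class_build _ _ _ _ S (T :\ b) z).
- by apply: disjointWr dST; apply: subD1set.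
- by [].
- by [].
- by rewrite -cU addn1 addn2 subnSK //; move: hm; rewrite addn2.
apply: (@main_local _ _ _ l wsl (fun s => nth 0 s 0 * nth 0 s 2) (fun s => nth 0 s 2)
          S (T :\ b :\ c) z).
- have bc : (b == c) = false by rewrite eq_sym (negbTE cb).
  by rewrite /= !inE !pos_eq !eqxx /= bc /=; case: (z b); case: (z c).
- by [].
- move=> i; rewrite !inE => /orP [iS|/andP [ic /andP [ib _]]]; last by rewrite negb_or ic ib.
  by rewrite negb_or; apply/andP; split; apply: contraTneq iS => ->;
     rewrite (disjointFl dST) // ?cT'.
- move=> v; rewrite hf (big_setD1 b bT) (big_setD1 c cTb') /rest /loc /= !Zc_pos.
  move: (\prod_(i in S) Wc v i) (\prod_(i in T :\ b :\ c) Zc z v i)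
        (v ord0 (pos b (z b))) (v ord0 (pos c (z c))) => A B C D.
  by f2case A; f2case B; f2case C; f2case D; apply/eqP; vm_compute.
- move=> v; rewrite (big_setD1 c cTb') /rest /loc /= !Zc_pos.
  move: (\prod_(i in S) Wc v i) (\prod_(i in T :\ b :\ c) Zc z v i)
        (v ord0 (pos c (z c))) => A B D.
  by f2case A; f2case B; f2case D; apply/eqP; vm_compute.
- move=> v; rewrite /loc /=.
  move: (v ord0 (pos b (z b))) (v ord0 (pos b (~~ z b)))
        (v ord0 (pos c (z c))) (v ord0 (pos c (~~ z c))) => x1 x2 x3 x4.
  rewrite !big_cons big_nil.
  by f2case x1; f2case x2; f2case x3; f2case x4; apply/eqP; vm_compute.
Qed.



Lemma case_b1 m sigma upsilon (f : Fn m) : (0 < sigma)%N ->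
  class_fun 0 sigma 1 upsilon f ->
  exists G : {set 'M['F_2]_(m + m)},
    (forall h, h \in G -> symplectic h) /\
    class_fun 0 sigma 0 upsilon.+1 (act G f).
Proof.
move=> hs /class_destr [S [T [z [[dST hm] cS cT cU hf]]]].
have [c cT'] : exists c, c \in T by apply/card_gt0P; rewrite cT.
have [a aS] : exists a, a \in S by apply/card_gt0P; rewrite cS.
have ac : (a == c) = false.
  by apply/negbTE; apply: contraTneq aS => ->; rewrite (disjointFl dST).
pose l : frame m := [:: (a, true); (c, z c)].
pose wsl := [:: [:: [:: 0; 0; 1; 0]]; [:: [:: 1; 0; 0; 0]; [:: 1; 0; 1; 0]];
                [:: [:: 0; 1; 1; 0]; [:: 1; 1; 1; 1]]] : seq (seq (seq 'F_2)).
exists (oddset [seq mxw l ws | ws <- wsl]); split; first exact: symp_oddset.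
apply: (@class_build _ _ _ _ S set0 z).
- by rewrite -setI_eq0 setI0.
- by [].
- by rewrite cards0.
- by rewrite -cU addn0 addn1 subnSK //; move: hm; rewrite addn1.
apply: (@main_local _ _ _ l wsl (fun s => nth 0 s 0 * nth 0 s 1 * nth 0 s 2)
          (fun s => nth 0 s 0 * nth 0 s 1) (S :\ a) (T :\ c) z).
- by rewrite /= !inE /pos; case: (z c) => /=; rewrite ?eq_lshift ?eq_rshift ?eq_lrshift ?eq_rlshift ?ac.
- by [].
- move=> i; rewrite !inE => /orP [/andP [ia iS]|/andP [ic iT]].
    rewrite negb_or ia /=; apply: contraTneq iS => ->; by rewrite (disjointFl dST).
  rewrite negb_or ic andbT; apply: contraTneq iT => ->; by rewrite (disjointFr dST).
- move=> v; rewrite hf (big_setD1 a aS) (big_setD1 c cT') /rest /loc /= !Zc_pos.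
  rewrite (Wc_pos _ _ true).
  move: (\prod_(i in S :\ a) Wc v i) (\prod_(i in T :\ c) Zc z v i)
        (v ord0 (pos a true)) (v ord0 (pos a false)) (v ord0 (pos c (z c))) => A B C D E.
  by f2case A; f2case B; f2case C; f2case D; f2case E; apply/eqP; vm_compute.
- move=> v; rewrite big_set0 mulr1 (big_setD1 a aS) /rest /loc /=.
  have -> : T :\ c = set0.
    by apply/eqP; rewrite -cards_eq0; move: cT; rewrite (cardsD1 c) cT' add1n => -[->].
  rewrite big_set0 (Wc_pos _ _ true).
  move: (\prod_(i in S :\ a) Wc v i)
        (v ord0 (pos a true)) (v ord0 (pos a false)) => A C D.
  by f2case A; f2case C; f2case D; apply/eqP; vm_compute.
- move=> v; rewrite /loc /=.
  move: (v ord0 (pos a true)) (v ord0 (pos a false))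
        (v ord0 (pos c (z c))) (v ord0 (pos c (~~ z c))) => x1 x2 x3 x4.
  rewrite !big_cons big_nil.
  by f2case x1; f2case x2; f2case x3; f2case x4; apply/eqP; vm_compute.
Qed.

Definition wA1 : seq (seq (seq 'F_2)) :=
  [:: [::]; [:: [:: 1;0;0;0;0;0]; [:: 1;0;1;0;0;0]];
            [:: [:: 1;0;1;0;0;0]; [:: 0;0;1;1;0;0]]].
Definition wA2 : seq (seq (seq 'F_2)) :=
  [:: [:: [:: 0;0;0;0;1;0]]; [:: [:: 1;0;0;0;0;0]; [:: 1;0;0;0;1;0]];
      [:: [:: 0;1;0;0;1;0]; [:: 1;1;0;0;1;1]]].
Definition wA := [seq g ++ h | g <- wA2, h <- wA1].

Lemma case_a m sigma tau upsilon (f : Fn m) : (2 < tau)%N ->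
  class_fun 0 sigma tau upsilon f ->
  exists G : {set 'M['F_2]_(m + m)},
    (forall h, h \in G -> symplectic h) /\
    class_fun 0 sigma.+1 (tau - 3) (upsilon + 2) (act G f).
Proof.
move=> ht /class_destr [S [T [z [[dST hm] cS cT cU hf]]]].
case: tau ht cT cU hm => [|[|[|t]]] // _ cT cU hm.
have -> : (t.+3 - 3 = t)%N by rewrite subSS subSS subSS subn0.
have [a aT] : exists a, a \in T by apply/card_gt0P; rewrite cT.
have cTa : #|T :\ a| = t.+2 by move: cT; rewrite (cardsD1 a) aT add1n => -[].
have [b bTa] : exists b, b \in T :\ a by apply/card_gt0P; rewrite cTa.
have cTb : #|T :\ a :\ b| = t.+1 by move: cTa; rewrite (cardsD1 b) bTa add1n => -[].
have [c cTb'] : exists c, c \in T :\ a :\ b by apply/card_gt0P; rewrite cTb.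
have cTc : #|T :\ a :\ b :\ c| = t by move: cTb; rewrite (cardsD1 c) cTb' add1n => -[].
move: (cTb'); rewrite !inE => /and3P [cb ca cT'].
move: (bTa); rewrite !inE => /andP [ba bT].
have aS : a \notin S by rewrite (disjointFl dST).
pose l : frame m := [:: (a, z a); (b, z b); (c, z c)].
exists (oddset [seq mxw l ws | ws <- wA]); split; first exact: symp_oddset.
apply: (@class_build _ _ _ _ (a |: S) (T :\ a :\ b :\ c) z).
- rewrite disjoints_subset; apply/subsetP => x; rewrite !inE => /orP [/eqP ->|xS].
    by rewrite eqxx !andbF.
  by rewrite (disjointFr dST xS) !andbF.
- by rewrite cardsU1 aS cS.
- by [].
- by rewrite -cU; move: hm; rewrite -!plusE -!minusE => /leP hm; lia.
apply: (@main_local _ _ _ l wA (fun s => nth 0 s 0 * nth 0 s 2 * nth 0 s 4)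
          (fun s => nth 0 s 0 * nth 0 s 1) S (T :\ a :\ b :\ c) z).
- have ab : (a == b) = false by rewrite eq_sym (negbTE ba).
  have bc : (b == c) = false by rewrite eq_sym (negbTE cb).
  have ac' : (a == c) = false by rewrite eq_sym (negbTE ca).
  rewrite /= !inE !pos_eq !eqxx /= ab bc ac' /=.
  by case: (z a); case: (z b); case: (z c).
- by [].
- move=> i; rewrite !inE => /orP [iS|/and4P [ic ib ia _]]; last by rewrite !negb_or ia ib ic.
  have iT : i \notin T by rewrite (disjointFr dST iS).
  rewrite !negb_or; apply/and3P; split; apply: contraNneq iT => ->.
  + by [].
  + by [].
  + by [].
- move=> v; rewrite hf (big_setD1 a aT) (big_setD1 b bTa) (big_setD1 c cTb') /rest /loc /= !Zc_pos.
  move: (\prod_(i in S) Wc v i) (\prod_(i in T :\ a :\ b :\ c) Zc z v i)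
        (v ord0 (pos a (z a))) (v ord0 (pos b (z b))) (v ord0 (pos c (z c))) => A B C D E.
  by f2case A; f2case B; f2case C; f2case D; f2case E; apply/eqP; vm_compute.
- move=> v; rewrite (big_setU1 _ aS) /rest /loc /= (Wc_pos _ _ (z a)).
  move: (\prod_(i in S) Wc v i) (\prod_(i in T :\ a :\ b :\ c) Zc z v i)
        (v ord0 (pos a (z a))) (v ord0 (pos a (~~ z a))) => A B C D.
  by f2case A; f2case B; f2case C; f2case D; apply/eqP; vm_compute.
- move=> v; rewrite /loc /=.
  move: (v ord0 (pos a (z a))) (v ord0 (pos a (~~ z a)))
        (v ord0 (pos b (z b))) (v ord0 (pos b (~~ z b)))
        (v ord0 (pos c (z c))) (v ord0 (pos c (~~ z c))) => x1 x2 x3 x4 x5 x6.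
  rewrite /wA /= !big_cons big_nil.
  by f2case x1; f2case x2; f2case x3; f2case x4; f2case x5; f2case x6; apply/eqP; vm_compute.
Qed.

End Helpers.
Import Helpers.

Theorem lemma6p4 (m r s sigma tau upsilon : nat) (f : Fn m)
  (hr : (1 <= r <= 2 * m - 1)%N)
  (hs : (1 < s <= 2 * m - r)%N)
  (hsigma : sigma = minn (2 * m - r - s + (if (r < m)%N then m - r else 0))%N
                         s./2)
  (htau : tau = (s - 2 * sigma)%N)
  (hupsilon : upsilon = (m - sigma - tau)%N)
  (hbasis : symp_basis_fun s f)
  (hclass : class_fun 0 sigma tau upsilon f) :
  [/\ (2 * sigma + 2 < s)%N ->
        exists G : {set 'M['F_2]_(m + m)},
          (forall h, h \in G -> symplectic h) /\
          class_fun 0 sigma.+1 (tau - 3) (upsilon + 2) (act G f),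
      (2 * sigma + 2 = s \/ 2 * sigma + 1 = s)%N ->
        exists G : {set 'M['F_2]_(m + m)},
          (forall h, h \in G -> symplectic h) /\
          class_fun 0 sigma (tau - 1) upsilon.+1 (act G f) &
      (2 * sigma = s)%N ->
        exists G : {set 'M['F_2]_(m + m)},
          (forall h, h \in G -> symplectic h) /\
          class_fun 0 sigma.-1 tau.+1 upsilon (act G f)].
Proof.
move: hs => /andP [hs1 _].
split.
- move=> h; apply: (case_a _ hclass).
  by rewrite htau ltn_subRL.
- move=> [h|h].
  + have t2 : tau = 2 by rewrite htau -h addKn.
    by move: hclass; rewrite t2 => /case_b2.
  + have t1 : tau = 1 by rewrite htau -h addKn.
    have hs0 : (0 < sigma)%N.
      by move: hs1; rewrite -h; case: sigma {h hsigma htau hupsilon hclass t1}.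
    by move: hclass; rewrite t1 => /(case_b1 hs0).
- move=> h.
  have t0 : tau = 0 by rewrite htau -h subnn.
  have hs0 : (0 < sigma)%N.
    by move: hs1; rewrite -h; case: sigma {h hsigma htau hupsilon hclass t0}.
  by move: hclass; rewrite t0 => /(case_c hs0).
Qed.
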